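(* Let $n\ge1$ and let $z_1,\dots,z_n$ be indeterminates. For all integers $m,k\ge0$, \[ \mathrm{monomial}_2(m,k,n)=e_m e_{m+k}+\sum_{i=1}^{m}(-1)^i\,\frac{k+2i}{i}\binom{k+i-1}{i-1}\,e_{m-i}\,e_{m+k+i}. \]
   Context: $e_r$ is the elementary symmetric polynomial of degree $r$ in $z_1,\dots,z_n$, with $e_0=1$ and $e_r=0$ for $r>n$. For integers $m_2,m_1\ge0$, $\mathrm{monomial}_2(m_2,m_1,n)$ is the monomial symmetric polynomial $\sum z^\alpha$ over all exponent vectors $\alpha\in\{0,1,2\}^n$ having exactly $m_2$ entries equal to $2$ and exactly $m_1$ entries equal to $1$. *)

(* Defs.v *)
From mathcomp Require Import all_boot all_order all_algebra.
From mathcomp Require Export mpoly.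
Set Implicit Arguments. Unset Strict Implicit. Unset Printing Implicit Defensive.
Import GRing.Theory.
Local Open Scope ring_scope.

(* elementary symmetric polynomial e_r in z_1..z_n over Q: mesym n rat r
   (0 for r > n, 1 for r = 0) *)
Definition e (n r : nat) : {mpoly rat[n]} := mesym n rat r.

Definition monomial2 (m2 m1 n : nat) : {mpoly rat[n]} :=
  \sum_(a : {ffun 'I_n -> 'I_3} |
          (#|[set j | val (a j) == 2%N]| == m2) && (#|[set j | val (a j) == 1%N]| == m1))
     \prod_(j < n) 'X_j ^+ (val (a j)).

(* Main.v *)
Require Import Defs.
From mathcomp Require Import all_boot all_order all_algebra.
From mathcomp Require Import mpoly.
From mathcomp Require Import ring lra zify.
Import GRing.Theory Num.Theory.
Local Open Scope ring_scope.
Set Implicit Arguments. Unset Strict Implicit. Unset Printing Implicit Defensive.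
Definition cc (k i : nat) : rat :=
  if i == 0%N then 1 else
  (-1) ^+ i * ((k + 2 * i)%:R / i%:R * ('C(k + i - 1, i - 1))%:R).

Lemma tele (k d p : nat) : (p <= d)%N ->
  d%:R * (\sum_(i < p.+1) cc k i * ('C(2 * d + k, d - i))%:R) =
  (-1) ^+ p * (d - p)%:R * ('C(k + p, p))%:R * ('C(2 * d + k, d - p))%:R.
Proof.
elim: p => [|p IH] hp.
  by rewrite big_ord1 /cc /= !subn0 bin0 expr0 !mul1r mulr1 mulrC.
rewrite big_ord_recr /= mulrDr IH ?(ltnW hp) //.
have [q ->] : exists q, d = (p.+1 + q)%N by exists (d - p.+1)%N; lia.
have e1 : (p.+1 + q - p = q.+1)%N by lia.
have e2 : (p.+1 + q - p.+1 = q)%N by lia.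
rewrite e1 e2 /cc /=.
have e3 : (k + p.+1 - 1 = k + p)%N by lia.
have e4 : (p.+1 - 1 = p)%N by lia.
rewrite e3 e4.
have h1 := mul_bin_diag (k + p.+1) p.
have h2 := mul_bin_left (2 * (p.+1 + q) + k) q.
have e5 : ((k + p.+1).-1 = k + p)%N by lia.
rewrite e5 in h1.
have e6 : (2 * (p.+1 + q) + k - q = q + 2 * p.+1 + k)%N by lia.
rewrite e6 in h2.
have h1' : ('C(k + p.+1, p.+1))%:R = (k + p.+1)%:R * ('C(k + p, p))%:R / (p.+1)%:R :> rat.
  by rewrite -natrM h1 natrM mulrAC divff ?mul1r // pnatr_eq0.
have h2' : ('C(2 * (p.+1 + q) + k, q.+1))%:R = (q + 2 * p.+1 + k)%:R * ('C(2 * (p.+1 + q) + k, q))%:R / (q.+1)%:R :> rat.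
  by rewrite -natrM -h2 natrM mulrAC divff ?mul1r // pnatr_eq0.
rewrite h1' h2'.
rewrite !natrD !natrM exprS.
set X := 'C(k + p, p)%:R; set Y := 'C(_, q)%:R.
have hp1 : p.+1%:R != 0 :> rat by rewrite pnatr_eq0.
have hq1 : q.+1%:R != 0 :> rat by rewrite pnatr_eq0.
rewrite -[p.+1%:R]natr1 -[q.+1%:R]natr1 in hp1 hq1 *.
field.
by rewrite hp1 hq1.
Qed.

Lemma coef_id (k d : nat) :
  \sum_(i < d.+1) cc k i * ('C(2 * d + k, d - i))%:R = (d == 0%N)%:R.
Proof.
case: d => [|d].
  by rewrite big_ord1 /cc /= bin0 mulr1.
have := @tele k d.+1 d.+1 (leqnn _); rewrite subnn mulr0 !mul0r => /eqP.
by rewrite mulf_eq0 pnatr_eq0 /= => /eqP.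
Qed.
Definition mon n (a : {ffun 'I_n -> 'I_3}) : {mpoly rat[n]} :=
  \prod_(j < n) 'X_j ^+ (val (a j)).
Definition tws n (a : {ffun 'I_n -> 'I_3}) : {set 'I_n} := [set j | val (a j) == 2%N].
Definition ons n (a : {ffun 'I_n -> 'I_3}) : {set 'I_n} := [set j | val (a j) == 1%N].
Definition fST n (S T : {set 'I_n}) : {ffun 'I_n -> 'I_3} :=
  [ffun j => inord ((j \in S) + (j \in T))%N].
Definition gU n (a : {ffun 'I_n -> 'I_3}) (U : {set 'I_n}) :=
  (tws a :|: U, tws a :|: (ons a :\: U)).
Definition cnt n (x y : nat) (a : {ffun 'I_n -> 'I_3}) :=
  #|[set p : {set 'I_n} * {set 'I_n} |
      (#|p.1| == x) && (#|p.2| == y) && (fST p.1 p.2 == a)]|.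

Lemma fST_val n (S T : {set 'I_n}) j : val (fST S T j) = ((j \in S) + (j \in T))%N.
Proof. rewrite ffunE /= inordK //; by case: (j \in S); case: (j \in T). Qed.

Lemma fST_g n (a : {ffun 'I_n -> 'I_3}) (U : {set 'I_n}) :
  U \subset ons a -> fST (gU a U).1 (gU a U).2 = a.
Proof.
move=> sub; apply/ffunP => j; apply/val_inj; rewrite fST_val /= !inE.
have := subsetP sub j; rewrite !inE.
case: (a j) => [[|[|[|v]]] hv] //=; case: (j \in U) => //=.
by move=> /(_ isT).
Qed.

Lemma fST_inv n (S T : {set 'I_n}) a :
  fST S T = a -> gU a (S :\: tws a) = (S, T) /\ S :\: tws a \subset ons a.
Proof.
move=> H.
have Hj j : ((j \in S) + (j \in T))%N = val (a j) by rewrite -H fST_val.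
split.
  rewrite /gU; congr (_, _); apply/setP => j; rewrite !inE; have := Hj j;
  case: (a j) => [[|[|[|v]]] hv] //=; case: (j \in S); case: (j \in T) => //=.
apply/subsetP => j; rewrite !inE; have := Hj j;
case: (a j) => [[|[|[|v]]] hv] //=; case: (j \in S); case: (j \in T) => //=.
Qed.

Lemma cU n (a : {ffun 'I_n -> 'I_3}) (U : {set 'I_n}) : U \subset ons a ->
  #|(gU a U).1| = (#|tws a| + #|U|)%N /\
  #|(gU a U).2| = (#|tws a| + (#|ons a| - #|U|))%N.
Proof.
move=> sub; rewrite /gU /= !cardsU.
have -> : tws a :&: U = set0.
  apply/setP => j; rewrite !inE; have := subsetP sub j; rewrite !inE.
  by case: (a j) => [[|[|[|v]]] hv] //=; case: (j \in U) => //= /(_ isT).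
have -> : tws a :&: (ons a :\: U) = set0.
  by apply/setP => j; rewrite !inE; case: (a j) => [[|[|[|v]]] hv] //=; rewrite andbF.
rewrite cardsD (setIidPr sub) !cards0 !subn0; by [].
Qed.

Lemma cnt_val n x y (a : {ffun 'I_n -> 'I_3}) :
  cnt x y a = if (#|tws a| <= x)%N && (x + y == 2 * #|tws a| + #|ons a|)%N
              then 'C(#|ons a|, x - #|tws a|) else 0%N.
Proof.
set Q := [set U : {set 'I_n} | (U \subset ons a) && (#|(gU a U).1| == x)
                                 && (#|(gU a U).2| == y)].
have -> : cnt x y a = #|gU a @: Q|.
  rewrite /cnt; apply: eq_card => -[S T]; rewrite !inE /=.
  apply/idP/imsetP.
    case/andP => /andP [hx hy] /eqP hf; have [e sub] := fST_inv hf.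
    by exists (S :\: tws a); rewrite ?inE ?sub e //= hx hy.
  case => U; rewrite inE => /andP [/andP [sub hx] hy] e.
  have -> : S = (gU a U).1 by rewrite -e.
  have -> : T = (gU a U).2 by rewrite -e.
  by rewrite hx hy /= fST_g.
rewrite card_in_imset; last first.
  move=> U1 U2; rewrite !inE => /andP[/andP[s1 _] _] /andP[/andP[s2 _] _].
  move=> /(congr1 fst); rewrite /gU /= => /setP e; apply/setP => j; have := e j.
  rewrite !inE; have := subsetP s1 j; have := subsetP s2 j; rewrite !inE.
  case: (a j) => [[|[|[|v]]] hv] //=; case: (j \in U1); case: (j \in U2) => //=;
  first [by move=> /(_ isT) | by move=> _ /(_ isT)].
have hleU (U : {set 'I_n}) : U \subset ons a -> (#|U| <= #|ons a|)%N by move=> h; exact: subset_leq_card h.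
case: ifP => [/andP [h1 /eqP h2] | hc].
  rewrite -cards_draws; apply: eq_card => U; rewrite !inE.
  case sub: (U \subset ons a) => //=; have [c1 c2] := cU sub; rewrite c1 c2.
  move: (hleU U sub) h1 h2; set u := #|U|; set o := #|ons a|; set t := #|tws a|.
  move=> hle h1 h2.
  apply/andP/eqP => [[/eqP h3 /eqP h4]|h3]; first by lia.
  by split; apply/eqP; lia.
apply: eq_card0 => U; rewrite !inE; apply/negP => /andP[/andP[sub /eqP h3] /eqP h4].
have [c1 c2] := cU sub; move: (hleU U sub) hc h3 h4; rewrite c1 c2.
set u := #|U|; set o := #|ons a|; set t := #|tws a| => hle hc h3 h4.
move: hc; rewrite -h3 -h4.
have -> : (t <= t + u)%N by lia.
by rewrite /= (_ : (_ == _) = true) //; apply/eqP; lia.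
Qed.

Lemma prodX n (S : {set 'I_n}) :
  \prod_(i in S) 'X_i = \prod_(j < n) 'X_j ^+ (j \in S) :> {mpoly rat[n]}.
Proof.
rewrite big_mkcond /=; apply: eq_bigr => j _.
by case: (j \in S); rewrite ?expr1 ?expr0.
Qed.

Lemma prod_mon n (S T : {set 'I_n}) :
  (\prod_(i in S) 'X_i) * (\prod_(i in T) 'X_i) = mon (fST S T).
Proof.
by rewrite !prodX -big_split /mon; apply: eq_bigr => j _; rewrite fST_val exprD.
Qed.

Lemma emul n x y :
  e n x * e n y = \sum_(a : {ffun 'I_n -> 'I_3}) (cnt x y a)%:R *: mon a.
Proof.
rewrite /e /mesym mulr_suml; under eq_bigr do rewrite mulr_sumr.
rewrite pair_big /=.
under eq_bigr do rewrite prod_mon.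
rewrite (partition_big (fun p => fST p.1 p.2) xpredT) //=.
apply: eq_bigr => a _.
rewrite (eq_bigr (fun _ => mon a)); last by move=> p /andP [_ /eqP ->].
rewrite scaler_nat /cnt -sumr_const.
by apply: eq_bigl => p; rewrite inE.
Qed.

Lemma coef_main k m t o :
  \sum_(i < m.+1) cc k i *
    (if (t <= m - i)%N && (m - i + (m + k + i) == 2 * t + o)%N
     then 'C(o, m - i - t) else 0%N)%:R = ((t == m) && (o == k))%:R.
Proof.
rewrite (eq_bigr (fun i : 'I_m.+1 => cc k i * (if (t <= m - i)%N && (2 * m + k == 2 * t + o)%N
     then 'C(o, m - i - t) else 0%N)%:R)); last first.
  by move=> i _; rewrite (_ : (m - i + (m + k + i) = 2 * m + k)%N) //; have := ltn_ord i; lia.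
case: (eqVneq (2 * m + k)%N (2 * t + o)%N) => h; last first.
  rewrite big1 => [|i _]; last by rewrite andbF mulr0.
  case: (t =P m) => // htm; case: (o =P k) => // hok.
  by move: h; rewrite htm hok eqxx.
case: (leqP t m) => htm; last first.
  rewrite big1 => [|i _]; last first.
    by rewrite (_ : (t <= m - i)%N = false) ?mulr0 //; apply/negbTE; rewrite -ltnNge; lia.
  by rewrite (_ : (t == m) = false) //; apply/negbTE; lia.
have [d hd] : exists d, m = (t + d)%N by exists (m - t)%N; lia.
have ho : o = (2 * d + k)%N by lia.
rewrite (_ : ((t == m) && (o == k)) = (d == 0%N)); last first.
  by apply/idP/idP => [/andP [/eqP h1 _]|/eqP h1]; [apply/eqP; lia | apply/andP; split; apply/eqP; lia].
rewrite -(coef_id k d) (big_ord_widen m.+1 (fun i => cc k i * ('C(2 * d + k, d - i))%:R));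
  last by lia.
rewrite [RHS]big_mkcond /=; apply: eq_bigr => i _.
rewrite ?h ?eqxx ?andbT.
move: (ltn_ord i); case: ifP; move: (nat_of_ord i) => j hi hj.
  have hid : (j < d.+1)%N by clear -hi hj hd; lia.
  rewrite hid ho (_ : (m - j - t = d - j)%N) //; clear -hi hj hd; lia.
have hid : (j < d.+1)%N = false.
  by apply/negbTE; move/negbT: hi; clear -hd hj; lia.
by rewrite hid mulr0.
Qed.

Theorem lemma3p3 (n : nat) (hn : (1 <= n)%N) (m k : nat) :
  monomial2 m k n =
    e n m * e n (m + k) +
    \sum_(1 <= i < m.+1)
      ((-1) ^+ i * ((k + 2 * i)%:R / i%:R * ('C(k + i - 1, i - 1))%:R : rat))
        *: (e n (m - i) * e n (m + k + i)).
Proof.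
have -> : \sum_(1 <= i < m.+1)
      ((-1) ^+ i * ((k + 2 * i)%:R / i%:R * ('C(k + i - 1, i - 1))%:R : rat))
        *: (e n (m - i) * e n (m + k + i)) =
   \sum_(0 <= i < m) cc k i.+1 *: (e n (m - i.+1) * e n (m + k + i.+1)).
  by rewrite big_add1 /=.
have -> : e n m * e n (m + k) = cc k 0 *: (e n (m - 0) * e n (m + k + 0)).
  by rewrite /cc /= scale1r subn0 addn0.
rewrite -(big_nat_recl m 0 (fun i => cc k i *: (e n (m - i) * e n (m + k + i)))) // big_mkord.
under eq_bigr do rewrite emul scaler_sumr.
rewrite exchange_big /= /monomial2 big_mkcond /=.
apply: eq_bigr => a _.
rewrite (eq_bigr (fun i : 'I_m.+1 => (cc k i * (cnt (m - i) (m + k + i) a)%:R) *: mon a));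
  last by move=> i _; rewrite scalerA.
rewrite -scaler_suml.
rewrite (eq_bigr (fun i : 'I_m.+1 => cc k i *
    (if (#|tws a| <= m - i)%N && (m - i + (m + k + i) == 2 * #|tws a| + #|ons a|)%N
     then 'C(#|ons a|, m - i - #|tws a|) else 0%N)%:R)); last by move=> i _; rewrite cnt_val.
rewrite coef_main /tws /ons /mon.
by case: ifP => _; rewrite ?scale1r ?scale0r.
Qed.
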